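(* Let $d_x, d_1, d_2 \ge 1$ be integers and let $\sigma:\mathbb{R}\to\mathbb{R}$ be a continuous piecewise linear function with $p \ge 2$ linear pieces. Let $\alpha_1,\alpha_2\in[0,1]$ be such that $\alpha_1 d_1$ and $\alpha_2 d_2$ are integers. Consider the architecture of selectively linearized fully connected networks $f_W:\mathbb{R}^{d_x}\to\mathbb{R}$ with two hidden layers of widths $d_1$ and $d_2$: $$z^1 = W^1 x + b^1,\quad a^1 = \phi_1(z^1),\quad z^2 = W^2 a^1 + b^2,\quad a^2=\phi_2(z^2),\quad f_W(x) = W^3 a^2 + b^3,$$ where $W^1\in\mathbb{R}^{d_1\times d_x}$, $W^2\in\mathbb{R}^{d_2\times d_1}$, $W^3\in\mathbb{R}^{1\times d_2}$, $b^1\in\mathbb{R}^{d_1}$, $b^2\in\mathbb{R}^{d_2}$, $b^3\in\mathbb{R}$ are the learnable parameters $W$, and for $l\in\{1,2\}$ the map $\phi_l$ acts coordinatewise by $$(\phi_l(z))_k = \begin{cases}\sigma(z_k) & \text{if } k\in\{1,\dots,\alpha_l d_l\},\\ z_k & \text{if } k\in\{\alpha_l d_l+1,\dots,d_l\}.\end{cases}$$ Then the memorization capacity of this architecture is at most $$\alpha_1\alpha_2 d_1 d_2\, p(p-1) + \alpha_2 d_2 (p-1) + \alpha_1(1-\alpha_2) d_1 d_2 (p-1) + 2.$$ In particular, when $\sigma$ is the ReLU ($p=2$), the memorization capacity is at most $\alpha_1(1+\alpha_2) d_1 d_2 + \alpha_2 d_2 + 2$.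
   Context: Memorization capacity: for a network architecture $f_W$ with learnable parameters $W$ and input dimension $d_x$, the memorization capacity is the largest $N$ such that for every choice of inputs $x_1,\dots,x_N\in\mathbb{R}^{d_x}$ (pairwise distinct) and every choice of labels $y_1,\dots,y_N\in[-1,1]$, there exist parameters $W$ with $f_W(x_i)=y_i$ for all $1\le i\le N$. A function $\mathbb{R}\to\mathbb{R}$ has ''$p$ linear pieces'' if $\mathbb{R}$ can be partitioned into $p$ intervals on each of which it is affine (and not fewer). The neurons with index $k\le \alpha_l d_l$ in layer $l$ keep the nonlinearity; the remaining ones are replaced by the identity (''linearized''). *)

(* Defs.v *)
From HB Require Import structures.
From mathcomp Require Import all_boot all_order all_algebra.
From mathcomp Require Import all_classical all_reals topology normedtype.
Set Implicit Arguments. Unset Strict Implicit. Unset Printing Implicit Defensive.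
Import Order.TTheory GRing.Theory Num.Theory.
Import numFieldNormedType.Exports.
Local Open Scope ring_scope.

Definition affine_on {R : realType} (sigma : R -> R) (I : interval R) : Prop :=
  exists a b : R, forall x : R, x \in I -> sigma x = a * x + b.

Definition pw_affine_partition {R : realType} (sigma : R -> R) (p : nat) : Prop :=
  exists I : 'I_p -> interval R,
    (forall x : R, exists! i : 'I_p, x \in I i) /\
    (forall i : 'I_p, affine_on sigma (I i)).

Definition has_linear_pieces {R : realType} (sigma : R -> R) (p : nat) : Prop :=
  pw_affine_partition sigma p /\
  forall q : nat, (q < p)%N -> ~ pw_affine_partition sigma q.

Definition sel_act {R : realType} (sigma : R -> R) (k : nat) {d : nat}
  (z : 'cV[R]_d) : 'cV[R]_d :=
  \col_(i < d) (if (i < k)%N then sigma (z i 0) else z i 0).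

Definition net {R : realType} (sigma : R -> R) (k1 k2 : nat) {dx d1 d2 : nat}
  (W1 : 'M[R]_(d1, dx)) (b1 : 'cV[R]_d1)
  (W2 : 'M[R]_(d2, d1)) (b2 : 'cV[R]_d2)
  (W3 : 'M[R]_(1, d2)) (b3 : R) (x : 'cV[R]_dx) : R :=
  let a1 := sel_act sigma k1 (W1 *m x + b1) in
  let a2 := sel_act sigma k2 (W2 *m a1 + b2) in
  (W3 *m a2) 0 0 + b3.

Definition memorizes {R : realType} (sigma : R -> R) (k1 k2 dx d1 d2 : nat)
  (N : nat) : Prop :=
  forall (x : 'I_N -> 'cV[R]_dx), injective x ->
  forall (y : 'I_N -> R), (forall i, -1 <= y i <= 1) ->
  exists (W1 : 'M[R]_(d1, dx)) (b1 : 'cV[R]_d1)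
         (W2 : 'M[R]_(d2, d1)) (b2 : 'cV[R]_d2)
         (W3 : 'M[R]_(1, d2)) (b3 : R),
    forall i : 'I_N, net sigma k1 k2 W1 b1 W2 b2 W3 b3 (x i) = y i.

Definition relu {R : realType} (x : R) : R := Num.max x 0.

(* Main.v *)
Require Import Defs.
From HB Require Import structures.
From mathcomp Require Import all_boot all_order all_algebra.
From mathcomp Require Import all_classical all_reals topology normedtype.
From mathcomp Require Import ring lra zify.
Set Implicit Arguments. Unset Strict Implicit. Unset Printing Implicit Defensive.
Import Order.TTheory GRing.Theory Num.Theory.
Import numFieldNormedType.Exports.
Local Open Scope ring_scope.
Section PLsec.
Variable R : realType.
Implicit Types (g h : R -> R) (cs : seq R).

Definition col3 g (x y z : R) := (g y - g x) * (z - x) = (g z - g x) * (y - x).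
Definition cutfree cs (x z : R) := all (fun c => ~~ ((x < c) && (c < z))) cs.
Definition PL g cs := forall x y z, x < y -> y < z -> cutfree cs x z -> col3 g x y z.

Lemma cutfreeP cs x z : cutfree cs x z <-> (forall c, c \in cs -> ~ (x < c < z)).
Proof.
split=> [/allP H c /H /negP //| H]; apply/allP => c /H /negP //.
Qed.

Lemma PL_mono g cs cs' : {subset cs <= cs'} -> PL g cs -> PL g cs'.
Proof.
move=> sub H x y z xy yz /cutfreeP cf; apply: H => //; apply/cutfreeP => c /sub; exact: cf.
Qed.

Lemma PL_affine a b cs : PL (fun t => a * t + b) cs.
Proof. move=> x y z _ _ _; rewrite /col3; ring. Qed.

Lemma PL_add g h cs : PL g cs -> PL h cs -> PL (fun t => g t + h t) cs.
Proof.
move=> Hg Hh x y z xy yz cf; have := Hg x y z xy yz cf; have := Hh x y z xy yz cf.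
rewrite /col3 => e1 e2.
have -> : (g y + h y - (g x + h x)) * (z - x) = (g y - g x) * (z - x) + (h y - h x) * (z - x) by ring.
rewrite e1 e2; ring.
Qed.

Lemma PL_scale a g cs : PL g cs -> PL (fun t => a * g t) cs.
Proof.
move=> Hg x y z xy yz cf; have := Hg x y z xy yz cf; rewrite /col3 => e.
have -> : (a * g y - a * g x) * (z - x) = a * ((g y - g x) * (z - x)) by ring.
rewrite e; ring.
Qed.

Lemma PL_const c cs : PL (fun _ => c) cs.
Proof. move=> x y z _ _ _; rewrite /col3; ring. Qed.

Lemma PL_sum n (F : 'I_n -> R -> R) cs :
  (forall i, PL (F i) cs) -> PL (fun t => \sum_(i < n) F i t) cs.
Proof.
move=> H; elim: n F H => [|n IH] F H.
  by under eq_fun do rewrite big_ord0; exact: PL_const.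
under eq_fun do rewrite big_ord_recr /=.
apply: PL_add; last exact: H.
exact: (IH (fun i => F (widen_ord (leqnSn n) i))).
Qed.

Lemma PL_aff g cs x z t : PL g cs -> x < z -> cutfree cs x z -> x <= t <= z ->
  g t = g x + (g z - g x) / (z - x) * (t - x).
Proof.
move=> H xz cf /andP[xt tz].
have zx : z - x != 0 by rewrite subr_eq0 gt_eqF.
case: (eqVneq t x) => [->|tx]; first by rewrite subrr mulr0 addr0.
case: (eqVneq t z) => [->|tzn]; first by rewrite divfK //; ring.
have xt' : x < t by rewrite lt_neqAle eq_sym tx.
have tz' : t < z by rewrite lt_neqAle tzn.
have := H x t z xt' tz' cf; rewrite /col3 => e.
apply: (mulIf zx).
have -> : g t * (z - x) = (g t - g x) * (z - x) + g x * (z - x) by ring.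
rewrite e; field; exact: zx.
Qed.

End PLsec.
Section Final.
Variable R : realType.
Implicit Types (g h : R -> R) (cs : seq R).

Lemma count_lt cs a b a' b' c : c \in cs -> a < c < b -> ~ (a' < c < b') ->
  (forall d, a' < d < b' -> a < d < b) ->
  (count (fun d : R => (a' < d)%R && (d < b')%R) cs < count (fun d : R => (a < d)%R && (d < b)%R) cs)%N.
Proof.
move=> cin hc hnc sub.
have := count_predUI (fun d : R => (a' < d)%R && (d < b')%R) (pred1 c) cs.
have -> : count (predI (fun d : R => (a' < d)%R && (d < b')%R) (pred1 c)) cs = 0%N.
  apply/eqP; rewrite -leqn0 leqNgt -has_count; apply/negP => /hasP [d _ /= /andP[h1 /eqP e]].
  by apply: hnc; rewrite -e.
have h1 : (0 < count (pred1 c) cs)%N by rewrite -has_count; apply/hasP; exists c => /=.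
have h2 : (count (predU (fun d : R => (a' < d)%R && (d < b')%R) (pred1 c)) cs <=
    count (fun d : R => (a < d)%R && (d < b)%R) cs)%N.
  apply: sub_count => d /= /orP[/sub //|/eqP ->]; exact: hc.
rewrite addn0 => e; apply: leq_trans h2; rewrite e -addn1 leq_add2l; exact: h1.
Qed.

Lemma witness g cs s a b : PL g cs -> a < b -> 0 < (g b - g a) * s ->
  exists u v, [/\ a <= u, u < v, v <= b, cutfree cs u v & 0 < (g v - g u) * s].
Proof.
move=> Hg.
move: {2}(count (fun d : R => (a < d)%R && (d < b)%R) cs) (leqnn (count (fun d : R => (a < d)%R && (d < b)%R) cs)) => n.
elim: n a b => [|n IH] a b hn ab hpos.
  exists a, b; split => //; apply/allP => c cin; apply/negP => Pc.
  have : (0 < count (fun d : R => (a < d)%R && (d < b)%R) cs)%N by rewrite -has_count; apply/hasP; exists c.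
  lia.
case hc: (has (fun d : R => (a < d)%R && (d < b)%R) cs); last first.
  exists a, b; split => //; apply/allP => c cin; apply/negP => Pc.
  by move/hasP: hc; apply; exists c.
move/hasP: hc => [c cin /andP[ac cb]].
have : 0 < (g c - g a) * s \/ 0 < (g b - g c) * s.
  case: (ltP 0 ((g c - g a) * s)) => h; [by left| right].
  have -> : (g b - g c) * s = (g b - g a) * s - (g c - g a) * s by ring.
  by rewrite subr_gt0 (le_lt_trans h).
case=> h.
- have hn' : (count (fun d : R => (a < d)%R && (d < c)%R) cs <= n)%N.
    rewrite -ltnS; apply: leq_trans hn; apply: (count_lt cin); first by rewrite ac cb.
      by rewrite ltxx andbF.
    by move=> d /andP[-> dc] /=; exact: lt_trans dc cb.
  have [u [v [h1 h2 h3 h4 h5]]] := IH a c hn' ac h.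
  exists u, v; split => //; exact: (le_trans h3 (ltW cb)).
- have hn' : (count (fun d : R => (c < d)%R && (d < b)%R) cs <= n)%N.
    rewrite -ltnS; apply: leq_trans hn; apply: (count_lt cin); first by rewrite ac cb.
      by rewrite ltxx.
    by move=> d /andP[cd ->]; rewrite andbT; exact: lt_trans ac cd.
  have [u [v [h1 h2 h3 h4 h5]]] := IH c b hn' cb h.
  exists u, v; split => //; exact: (le_trans (ltW ac) h1).
Qed.

Lemma sign_sq (k : nat) : ((-1) ^+ k : R) * (-1) ^+ k = 1.
Proof. by rewrite -exprD addnn -mul2n exprM sqrrN !expr1n. Qed.

Lemma alt_bound g cs N : PL g cs -> (forall i, (i < N)%N -> g i%:R = (-1) ^+ i) ->
  (N <= size cs + 2)%N.
Proof.
move=> Hg Hd.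
have natlt : forall k, (k%:R < k.+1%:R :> R) by move=> k; rewrite ltr_nat.
have seg : forall k, (k.+1 < N)%N -> 0 < (g k.+1%:R - g k%:R) * (-1) ^+ k.+1.
  move=> k hk; rewrite !Hd //; last by lia.
  rewrite exprS; have := sign_sq k; set e := (-1) ^+ k => ee.
  have -> : (-1 * e - e) * (-1 * e) = 2 * (e * e) by ring.
  by rewrite ee mulr1.
have claim : forall k, (k.+1 < N)%N -> forall u v, k%:R <= u -> u < v -> v <= k.+1%:R ->
    cutfree cs u v -> 0 < (g v - g u) * (-1) ^+ k.+1 ->
    (k <= count (fun c : R => (c <= u)%R) cs)%N.
  elim=> [//|k IH] hk u v ku uv vk cf hs.
  have [u0 [v0 [h1 h2 h3 h4 h5]]] :=
    witness Hg (natlt k) (seg k (ltnW hk)).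
  have IHk := IH (ltnW hk) u0 v0 h1 h2 h3 h4 h5.
  have u0v : u0 < v by apply: (lt_le_trans h2); apply: (le_trans h3); apply: (le_trans ku); exact: ltW.
  have /hasP [c cin /andP[c1 c2]] : has (fun c : R => (u0 < c)%R && (c < v)%R) cs.
    apply/negPn/negP => hn.
    have cf' : cutfree cs u0 v.
      apply/allP => c cin; apply/negP => Pc; by move/hasP: hn; apply; exists c.
    have v0u : v0 <= u by apply: (le_trans h3) ku.
    set al := (g v - g u0) / (v - u0).
    have e1 : g v0 = g u0 + al * (v0 - u0).
      apply: (PL_aff Hg u0v cf'); rewrite (ltW h2) /=; exact: (le_trans v0u (ltW uv)).
    have e2 : g u = g u0 + al * (u - u0).
      apply: (PL_aff Hg u0v cf'); rewrite (ltW uv) andbT; exact: (le_trans (ltW h2) v0u).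
    have e3 : g v = g u0 + al * (v - u0).
      apply: (PL_aff Hg u0v cf'); rewrite lexx andbT; exact: ltW.
    rewrite [(-1) ^+ k.+2]exprS in hs; move: h5 hs; rewrite e1 e2 e3; set e := (-1) ^+ k.+1.
    have -> : (g u0 + al * (v0 - u0) - g u0) * e = (v0 - u0) * (al * e) by ring.
    have -> : (g u0 + al * (v - u0) - (g u0 + al * (u - u0))) * (-1 * e) = (v - u) * - (al * e) by ring.
    move=> p1 p2; have hv0 : 0 < v0 - u0 by rewrite subr_gt0.
    have hv : 0 < v - u by rewrite subr_gt0.
    rewrite (pmulr_rgt0 _ hv0) in p1; rewrite (pmulr_rgt0 _ hv) oppr_gt0 in p2.
    by have := lt_trans p2 p1; rewrite ltxx.
  have cv0 : v0 <= c.
    rewrite leNgt; apply/negP => cv0; move/allP: h4 => /(_ c cin); rewrite c1 cv0.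
    by [].
  have cu : c <= u.
    rewrite leNgt; apply/negP => uc; move/allP: cf => /(_ c cin); rewrite uc c2.
    by [].
  have := count_predUI (fun c : R => (c <= u0)%R) (fun d : R => (v0 <= d)%R && (d <= u)%R) cs.
  have -> : count (predI (fun c : R => (c <= u0)%R) (fun d : R => (v0 <= d)%R && (d <= u)%R)) cs = 0%N.
    apply/eqP; rewrite -leqn0 leqNgt -has_count; apply/negP => /hasP [d _ /= /andP[h6 /andP[h7 _]]].
    by have := le_trans h7 h6; rewrite leNgt h2.
  have hp : (0 < count (fun d : R => (v0 <= d)%R && (d <= u)%R) cs)%N.
    by rewrite -has_count; apply/hasP; exists c => //=; rewrite cv0 cu.
  have hsub : (count (predU (fun c : R => (c <= u0)%R) (fun d : R => (v0 <= d)%R && (d <= u)%R)) cs <=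
      count (fun c : R => (c <= u)%R) cs)%N.
    apply: sub_count => d /= /orP[h6|/andP[_ //]].
    apply: (le_trans h6); apply: (le_trans (ltW h2)); apply: (le_trans h3) ku.
  rewrite addn0 => e; apply: leq_trans hsub; rewrite e -addn1; exact: leq_add IHk hp.
case: N Hd seg claim => [|[|[|N]]] Hd seg claim; try by rewrite addnC.
have [u [v [h1 h2 h3 h4 h5]]] := witness Hg (natlt N.+1) (seg N.+1 (ltnSn _)).
have := claim N.+1 (ltnSn _) u v h1 h2 h3 h4 h5.
have := count_size (fun c : R => c <= u) cs.
lia.
Qed.
End Final.
Section Comp.
Variable R : realType.
Implicit Types (g h : R -> R) (cs : seq R).

Lemma family m (P : 'I_m -> seq R -> Prop) (s : 'I_m -> nat) :
  (forall j l l', P j l -> {subset l <= l'} -> P j l') ->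
  (forall j, exists l, (size l <= s j)%N /\ P j l) ->
  exists l, (size l <= \sum_(j < m) s j)%N /\ forall j, P j l.
Proof.
move=> mono H.
have [u hu] := fin_all_exists H.
exists (flatten [seq u j | j <- enum 'I_m]); split.
  rewrite size_flatten sumnE /shape -map_comp big_map big_enum /=.
  by apply: leq_sum => j _; case: (hu j).
move=> j; apply: (mono j (u j)); first by case: (hu j).
move=> x xin; apply/flattenP; exists (u j) => //; apply: map_f; exact: mem_enum.
Qed.

Lemma path_count (P : R -> Prop) cs :
  (forall w1 w2, P w1 -> P w2 -> w1 < w2 -> exists2 c, c \in cs & w1 < c < w2) ->
  forall s w, path <%R w s -> (forall x, x \in w :: s -> P x) ->
  (size s <= count (fun c : R => (w < c)%R) cs)%N.
Proof.
move=> sep; elim=> [//|w' s IH] w /= /andP[ww' pa] allP'.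
have IH' := IH w' pa (fun x xin => allP' x ltac:(by rewrite inE xin orbT)).
have [c cin /andP[c1 c2]] := sep w w' (allP' w (mem_head _ _)) (allP' w' ltac:(by rewrite inE mem_head orbT)) ww'.
have := count_predUI (fun c : R => (w' < c)%R) (fun d : R => (w < d)%R && (d < w')%R) cs.
have -> : count (predI (fun c : R => (w' < c)%R) (fun d : R => (w < d)%R && (d < w')%R)) cs = 0%N.
  apply/eqP; rewrite -leqn0 leqNgt -has_count; apply/negP => /hasP [d _ /= /andP[h6 /andP[_ h7]]].
  by have := lt_trans h6 h7; rewrite ltxx.
have hp : (0 < count (fun d : R => (w < d)%R && (d < w')%R) cs)%N.
  by rewrite -has_count; apply/hasP; exists c => //=; rewrite c1 c2.
have hsub : (count (predU (fun c : R => (w' < c)%R) (fun d : R => (w < d)%R && (d < w')%R)) cs <=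
    count (fun c : R => (w < c)%R) cs)%N.
  apply: sub_count => d /= /orP[h6|/andP[// _]]; exact: lt_trans ww' h6.
rewrite addn0 => e; apply: leq_trans hsub; rewrite e -addn1; exact: leq_add IH' hp.
Qed.

Lemma uniq_bound (P : R -> Prop) cs :
  (forall w1 w2, P w1 -> P w2 -> w1 < w2 -> exists2 c, c \in cs & w1 < c < w2) ->
  forall l, uniq l -> (forall x, x \in l -> P x) -> (size l <= size cs + 1)%N.
Proof.
move=> sep l ul Pl.
have srt : sorted <%R (sort <=%R l).
  by rewrite lt_sorted_uniq_le sort_uniq ul sort_sorted //; exact: le_total.
rewrite -(size_sort <=%R l).
move: srt (fun x (xin : x \in sort <=%R l) => Pl x ltac:(by rewrite -(mem_sort <=%R))).
case: (sort <=%R l) => [//|w s] /= pa Ps.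
have := path_count sep pa Ps; have := count_size (fun c : R => (w < c)%R) cs.
move=> h1 h2; rewrite addn1 ltnS; exact: leq_trans h2 h1.
Qed.

Lemma fin_set (P : R -> Prop) cs :
  (forall w1 w2, P w1 -> P w2 -> w1 < w2 -> exists2 c, c \in cs & w1 < c < w2) ->
  exists l, (size l <= size cs + 1)%N /\ forall w, P w -> w \in l.
Proof.
move=> sep.
case: (pselect (exists l, (size l <= size cs + 1)%N /\ forall w, P w -> w \in l)) => // hno.
have grow : forall n, exists l, [/\ uniq l, (forall x, x \in l -> P x) & size l = n].
  elim=> [|n [l [ul Pl sl]]]; first by exists [::].
  have : ~ (forall w, P w -> w \in l).
    move=> H; apply: hno; exists l; split => //; exact: uniq_bound sep l ul Pl.
  move/existsNP => [w hw].
  have Pw : P w by case: (pselect (P w)) => // nPw; exfalso; apply: hw => /nPw.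
  have wl : w \notin l by apply/negP => wl; apply: hw => _; exact: wl.
  exists (w :: l); split => /=; [by rewrite wl ul | | by rewrite sl].
  by move=> x; rewrite inE => /orP[/eqP ->|/Pl].
have [l [ul Pl sl]] := grow (size cs + 2)%N.
have := uniq_bound sep ul Pl; rewrite sl; lia.
Qed.

Lemma col3_sym g x y z : col3 g z y x -> col3 g x y z.
Proof.
rewrite /col3 => e; apply/eqP; rewrite -subr_eq0.
have -> : (g y - g x) * (z - x) - (g z - g x) * (y - x) =
   - ((g y - g z) * (x - z) - (g x - g z) * (y - z)) by ring.
by rewrite e subrr oppr0.
Qed.

Lemma cutfree_cat cs cs' x z : cutfree (cs ++ cs') x z = cutfree cs x z && cutfree cs' x z.
Proof. by rewrite /cutfree all_cat. Qed.

Lemma const_window h cs a b w1 w2 t : PL h cs -> a < b -> cutfree cs a b ->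
  a <= w1 -> w1 < w2 -> w2 <= b -> h w1 = h w2 -> a <= t <= b -> h t = h a.
Proof.
move=> Hh ab cf aw1 w12 w2b e tab.
have w1in : a <= w1 <= b by rewrite aw1 /=; exact: le_trans (ltW w12) w2b.
have w2in : a <= w2 <= b by rewrite w2b andbT; exact: le_trans aw1 (ltW w12).
move: e; rewrite (PL_aff Hh ab cf w1in) (PL_aff Hh ab cf w2in) (PL_aff Hh ab cf tab).
set al := (h b - h a) / (b - a) => e.
have : al * (w2 - w1) = 0.
  have -> : al * (w2 - w1) = (h a + al * (w2 - a)) - (h a + al * (w1 - a)) by ring.
  by rewrite -e subrr.
move=> /eqP; rewrite mulf_eq0 subr_eq0 (gt_eqF w12) orbF => /eqP ->.
by rewrite mul0r addr0.
Qed.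

End Comp.
Section Comp2.
Variable R : realType.
Implicit Types (g h : R -> R) (cs : seq R).

Lemma ratio (a b c : R) : (a < c < b) || (b < c < a) -> 0 < (c - a) / (b - a) < 1.
Proof.
case/orP => /andP[h1 h2].
  have ba : 0 < b - a by rewrite subr_gt0; exact: lt_trans h1 h2.
  apply/andP; split; first by apply: divr_gt0; rewrite // subr_gt0.
  rewrite ltr_pdivrMr // mul1r; lra.
rewrite -[c - a]opprB -[b - a]opprB invrN mulrNN.
have ba : 0 < a - b by rewrite subr_gt0; exact: lt_trans h1 h2.
apply/andP; split; first by apply: divr_gt0; rewrite // subr_gt0.
  rewrite ltr_pdivrMr // mul1r; lra.
Qed.

Lemma PL_comp sig S h cs : PL sig S -> PL h cs ->
  exists W, (size W <= size S * (size cs + 1))%N /\ PL (fun t => sig (h t)) (cs ++ W).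
Proof.
move=> Hs Hh.
pose Pc c w := h w = c /\ exists x z, [/\ x < w, w < z, cutfree cs x z & h x != h z].
have sepc : forall c w1 w2, Pc c w1 -> Pc c w2 -> w1 < w2 -> exists2 d, d \in cs & w1 < d < w2.
  move=> c w1 w2 [e1 [x1 [z1 [xw1 wz1 cf1 ne1]]]] [e2 [x2 [z2 [xw2 wz2 cf2 ne2]]]] w12.
  case: (pselect (exists2 d, d \in cs & w1 < d < w2)) => // hno; exfalso.
  have cfw : forall d, d \in cs -> ~ (w1 < d < w2) by move=> d din hd; apply: hno; exists d.
  have e : h w1 = h w2 by rewrite e1 e2.
  case: (leP z1 z2) => hz.
  - have x1z2 : x1 < z2 by apply: (lt_trans xw1); apply: (lt_trans w12).
    have cf : cutfree cs x1 z2.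
      apply/cutfreeP => d din /andP[d1 d2].
      case: (ltP d z1) => dz1.
        by move/cutfreeP: cf1 => /(_ d din); apply; rewrite d1 dz1.
      case: (ltP d w2) => dw2.
        apply: (cfw d din); rewrite dw2 andbT; exact: lt_le_trans wz1 dz1.
      move/cutfreeP: cf2 => /(_ d din); apply; rewrite d2 andbT; exact: lt_le_trans xw2 dw2.
    have K := const_window Hh x1z2 cf (ltW xw1) w12 (ltW wz2) e.
    move/eqP: ne1; apply; rewrite (K z1); last by rewrite hz andbT; apply: ltW; exact: lt_trans xw1 wz1.
    done.
  - have x1z1 : x1 < z1 by exact: lt_trans xw1 wz1.
    have K := const_window Hh x1z1 cf1 (ltW xw1) w12 (ltW (lt_trans wz2 hz)) e.
    move/eqP: ne1; apply; rewrite (K z1); last by rewrite lexx andbT; exact: ltW.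
    done.
have gath : forall S' : seq R, exists W, (size W <= size S' * (size cs + 1))%N /\
    forall c w, c \in S' -> Pc c w -> w \in W.
  elim=> [|c S' [W [sW hW]]]; first by exists [::].
  have [l [sl hl]] := fin_set (sepc c).
  exists (l ++ W); split; first by rewrite size_cat mulSn leq_add.
  move=> c' w; rewrite inE mem_cat => /orP[/eqP -> /hl -> //|hc /(hW _ _ hc) ->]; by rewrite orbT.
have [W [sW hW]] := gath S.
exists W; split => //.
move=> x y z xy yz; rewrite cutfree_cat => /andP[cf cfW].
have xz := lt_trans xy yz.
have zx0 : z - x != 0 by rewrite subr_eq0 gt_eqF.
have yin : x <= y <= z by rewrite !ltW.
have ey := PL_aff Hh xz cf yin.
set al := (h z - h x) / (z - x) in ey.
have e1 : h z - h x = al * (z - x) by rewrite /al divfK.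
have e2 : h y - h x = al * (y - x) by rewrite ey; ring.
case: (eqVneq (h x) (h z)) => hxz.
  have hy : h y = h x by rewrite ey /al -hxz subrr !mul0r addr0.
  by rewrite /col3 hy -hxz !subrr !mul0r.
have alnz : al != 0.
  by apply/eqP => al0; move: e1; rewrite al0 mul0r => /eqP; rewrite subr_eq0 eq_sym (negbTE hxz).
have key : forall c, c \in S -> ~ ((h x < c < h z) || (h z < c < h x)).
  move=> c cS hc.
  have /andP[r1 r2] := ratio hc.
  set la := (c - h x) / (h z - h x) in r1 r2.
  set w := x + la * (z - x).
  have xw : x < w by rewrite /w ltrDl mulr_gt0 // subr_gt0.
  have wz : w < z.
    have h0 : 0 < z - x by rewrite subr_gt0.
    have : la * (z - x) < 1 * (z - x) by rewrite ltr_pM2r.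
    rewrite /w mul1r; lra.
  have win : x <= w <= z by rewrite !ltW.
  have hw : h w = c.
    rewrite (PL_aff Hh xz cf win) -/al /w /la.
    have hzx : h z - h x != 0 by rewrite subr_eq0 eq_sym.
    rewrite /al; field; rewrite ?zx0 ?hzx ?andbT //.
  have : w \in W by apply: (hW c w cS); split => //; exists x, z; split.
  move/cutfreeP: cfW => H /H; apply; by rewrite xw wz.
have c3 : col3 sig (h x) (h y) (h z).
  case: (ltgtP (h x) (h z)) hxz => // hlt _.
  - have al0 : 0 < al by rewrite /al divr_gt0 ?subr_gt0.
    apply: Hs.
    + by rewrite -subr_gt0 e2 mulr_gt0 // subr_gt0.
    + rewrite -subr_gt0 (_ : h z - h y = al * (z - y)); first by rewrite mulr_gt0 // subr_gt0.
      have -> : h z - h y = (h z - h x) - (h y - h x) by ring.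
      rewrite e1 e2; ring.
    + apply/cutfreeP => c0 cS hc; apply: (key c0 cS); by rewrite hc.
  - have al0 : al < 0 by rewrite /al pmulr_llt0 ?invr_gt0 ?subr_gt0 // subr_lt0.
    apply: col3_sym; apply: Hs.
    + rewrite -subr_gt0 (_ : h y - h z = - al * (z - y)); first by rewrite mulr_gt0 // ?oppr_gt0 // subr_gt0.
      have -> : h y - h z = (h y - h x) - (h z - h x) by ring.
      rewrite e1 e2; ring.
    + by rewrite -subr_gt0 (_ : h x - h y = - al * (y - x)) ?mulr_gt0 ?oppr_gt0 ?subr_gt0 //; rewrite -opprB e2; ring.
    + apply/cutfreeP => c0 cS hc; apply: (key c0 cS); by rewrite hc orbT.
move: c3; rewrite /col3 e1 e2 => c3.
apply: (mulfI alnz); rewrite mulrCA [al * (_ * (y - x))]mulrCA c3; ring.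
Qed.
End Comp2.
Local Open Scope classical_set_scope.
Section Cont.
Variable R : realType.
Lemma cont_left (f : R -> R) (x z a b : R) : continuous f -> x < z ->
  (forall t, x < t -> t < z -> f t = a * t + b) -> f x = a * x + b.
Proof.
move=> hf xz H.
pose g := fun t => f t - (a * t + b).
have cg : g @ x^'+ --> g x.
  apply: cvg_at_right_filter; apply: cvgB; first exact: hf.
  apply: cvgD; last exact: cvg_cst.
  apply: cvgM; [exact: cvg_cst | exact: cvg_id].
have c0 : g @ x^'+ --> 0.
  apply: cvg_near_cst; near=> t.
  have xt : x < t by near: t; exact: nbhs_right_gt.
  have tz : t < z by near: t; exact: nbhs_right_lt.
  by rewrite /g H ?subrr.
have e : g x = 0 by apply: (cvg_unique _ cg c0).
by move/eqP: e; rewrite /g subr_eq0 => /eqP.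
Unshelve. all: by end_near.
Qed.
Lemma cont_right (f : R -> R) (x z a b : R) : continuous f -> x < z ->
  (forall t, x < t -> t < z -> f t = a * t + b) -> f z = a * z + b.
Proof.
move=> hf xz H.
pose g := fun t => f t - (a * t + b).
have cg : g @ z^'- --> g z.
  apply: cvg_at_left_filter; apply: cvgB; first exact: hf.
  apply: cvgD; last exact: cvg_cst.
  apply: cvgM; [exact: cvg_cst | exact: cvg_id].
have c0 : g @ z^'- --> 0.
  apply: cvg_near_cst; near=> t.
  have xt : x < t by near: t; exact: nbhs_left_gt.
  have tz : t < z by near: t; exact: nbhs_left_lt.
  by rewrite /g H ?subrr.
have e : g z = 0 by apply: (cvg_unique _ cg c0).
by move/eqP: e; rewrite /g subr_eq0 => /eqP.
Unshelve. all: by end_near.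
Qed.
End Cont.
Section Itv.
Variable R : realType.
Definition rv (J : interval R) : R :=
  match J with Interval _ (BSide _ s) => s | _ => 0 end.

Lemma itv_rv_le (J : interval R) q : q \in J ->
  (exists b s, (let: Interval _ r := J in r) = BSide b s) -> q <= rv J.
Proof.
case: J => l r; rewrite itv_boundlr => /andP[_ hr] [b [s /= e]]; subst r.
move: hr; case: b => /=; rewrite ?bnd_simp => h //; exact: ltW.
Qed.

Lemma itv_right (J : interval R) q t : q \in J -> q <= t ->
  (forall b s, (let: Interval _ r := J in r) = BSide b s -> t < s) -> t \in J.
Proof.
case: J => l r; rewrite !itv_boundlr => /andP[hl hr] qt H.
apply/andP; split.
  apply: (le_trans hl); rewrite bnd_simp //.
move: hr H; case: r => [b s|[]] /= hr H.
- have ts := H b s erefl; clear H; case: b hr => /= _; rewrite bnd_simp //; exact: ltW.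
- by [].
- by [].
Qed.
End Itv.
Section PW.
Variable R : realType.

Lemma pw_PL (sig : R -> R) p : continuous sig -> pw_affine_partition sig p ->
  exists S, (size S <= p.-1)%N /\ PL sig S.
Proof.
move=> hc [I [hpart haff]].
pose M := 1 + \sum_(i < p) `|rv (I i)|.
have rvM : forall i, rv (I i) < M.
  move=> i; have h1 : rv (I i) <= `|rv (I i)| by exact: ler_norm.
  have h2 : `|rv (I i)| <= \sum_(j < p) `|rv (I j)|.
    rewrite (bigD1 i) //= lerDl; apply: sumr_ge0 => j _; exact: normr_ge0.
  rewrite /M; lra.
have [i0 [Mi0 _]] := hpart M.
have noB : forall b s, (let: Interval _ r := I i0 in r) <> BSide b s.
  move=> b s e; have := itv_rv_le Mi0 (ex_intro _ b (ex_intro _ s e)).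
  by rewrite leNgt rvM.
exists [seq rv (I i) | i <- enum 'I_p & i != i0]; split.
  rewrite size_map size_filter.
  have := count_predC (fun i => i != i0) (enum 'I_p).
  have -> : count (predC (fun i => i != i0)) (enum 'I_p) = 1%N.
    rewrite (eq_count (a2 := pred1 i0)); last by move=> j /=; rewrite negbK.
    by rewrite count_uniq_mem ?enum_uniq // mem_enum.
  rewrite -cardE card_ord; move: (count _ _) => c; lia.
move=> x y z xy yz /cutfreeP cf.
have ext : forall a q t, q \in I a -> x < q -> q <= t -> t < z -> t \in I a.
  move=> a q t qa xq qt tz; apply: (itv_right qa qt) => b s e.
  case: (eqVneq a i0) => [ai0|ai0]; first by subst a; case: (noB b s e).
  have qs := itv_rv_le qa (ex_intro _ b (ex_intro _ s e)).
  have sS : rv (I a) \in [seq rv (I i) | i <- enum 'I_p & i != i0].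
    by apply: map_f; rewrite mem_filter ai0 mem_enum.
  have := cf _ sS; have -> : rv (I a) = s by case: (I a) e => l r /= ->.
  move=> H; apply: (lt_le_trans tz); rewrite leNgt; apply/negP => sz; apply: H.
  rewrite sz andbT; apply: lt_le_trans xq _; by move: qs; case: (I a) e => l r /= ->.
have [a [ya ua]] := hpart y.
have allin : forall t, x < t -> t < z -> t \in I a.
  move=> t xt tz; case: (leP y t) => yt.
    exact: (ext a y t ya xy yt tz).
  have [b [tb _]] := hpart t.
  have yb : y \in I b by apply: (ext b t y tb xt (ltW yt) yz).
  by rewrite (ua b yb).
have [al [be hab]] := haff a.
have H : forall t, x < t -> t < z -> sig t = al * t + be.
  by move=> t xt tz; apply: hab; exact: allin.
have sx := cont_left hc (lt_trans xy yz) H.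
have sz := cont_right hc (lt_trans xy yz) H.
by rewrite /col3 sx sz (H y xy yz); ring.
Qed.

Lemma PL_relu : PL (@relu R) [:: 0].
Proof.
move=> x y z xy yz; rewrite /cutfree /= andbT negb_and -!leNgt => /orP[x0|z0].
  have h t : x <= t -> relu t = t by move=> xt; rewrite /relu max_l //; exact: le_trans x0 xt.
  have hy : x <= y by exact: ltW.
  have hz : x <= z by exact: ltW (lt_trans xy yz).
  rewrite /col3 (h x (lexx x)) (h y hy) (h z hz); ring.
have h t : t <= z -> relu t = 0 by move=> tz; rewrite /relu max_r //; exact: le_trans tz z0.
have hy : y <= z by exact: ltW.
have hx : x <= z by exact: ltW (lt_trans xy yz).
rewrite /col3 (h x hx) (h y hy) (h z (lexx z)); ring.
Qed.
End PW.
Section Net.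
Variable R : realType.
Lemma net_expand (sig : R -> R) k1 k2 dx d1 d2 (W1 : 'M[R]_(d1, dx)) (b1 : 'cV[R]_d1)
  (W2 : 'M[R]_(d2, d1)) (b2 : 'cV[R]_d2) (W3 : 'M[R]_(1, d2)) (b3 : R) (v : 'cV[R]_dx) :
  net sig k1 k2 W1 b1 W2 b2 W3 b3 v =
  \sum_(j < d2) W3 0 j *
    (let z2 := \sum_(k < d1) W2 j k *
        (let z1 := \sum_(i < dx) W1 k i * v i 0 + b1 k 0 in
         if (k < k1)%N then sig z1 else z1) + b2 j 0 in
     if (j < k2)%N then sig z2 else z2) + b3.
Proof.
rewrite /net mxE; congr (_ + _); apply: eq_bigr => j _.
rewrite /sel_act !mxE.
under eq_bigr => k _ do rewrite !mxE.
by [].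
Qed.
End Net.
Section Core.
Variable R : realType.

Lemma PL_ext (f f' : R -> R) cs : (forall t, f t = f' t) -> PL f' cs -> PL f cs.
Proof. by move=> e H x y z xy yz cf; rewrite /col3 !e; apply: H. Qed.

Lemma sum_if d k c : (\sum_(j < d) (if (j < k)%N then c else 0) <= k * c)%N.
Proof.
suff : (\sum_(j < d) (if (j < k)%N then c else 0) <= minn d k * c)%N.
  move=> h; apply: (leq_trans h); apply: leq_mul => //; exact: geq_minr.
elim: d => [|d IH]; first by rewrite big_ord0.
rewrite big_ord_recr /=; case: ifP => dk.
  have -> : minn d.+1 k = (minn d k).+1 by rewrite !minnE; lia.
  by rewrite mulSn addnC leq_add2l.
have -> : minn d.+1 k = minn d k by move/negbT: dk; rewrite -leqNgt => dk; rewrite !minnE; lia.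
by rewrite addn0.
Qed.

Lemma core (sig : R -> R) S k1 k2 dx d1 d2 N : (0 < dx)%N -> PL sig S ->
  memorizes sig k1 k2 dx d1 d2 N ->
  (N <= k1 * size S + k2 * (size S * (k1 * size S + 1)) + 2)%N.
Proof.
move=> hdx HS mem.
pose i0 : 'I_dx := Ordinal hdx.
pose e : 'cV[R]_dx := \col_(i < dx) (if i == i0 then 1 else 0).
pose xs (i : 'I_N) : 'cV[R]_dx := (i : nat)%:R *: e.
have inj : injective xs.
  move=> i j eij; have := congr1 (fun v : 'cV[R]_dx => v i0 0) eij.
  rewrite /= !mxE eqxx !mulr1 => /eqP.
  by rewrite eqr_nat => /eqP; exact: val_inj.
pose ys (i : 'I_N) : R := (-1) ^+ i.
have hy : forall i, -1 <= ys i <= 1.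
  by move=> i; rewrite /ys -signr_odd; case: odd; rewrite /= ?expr0 ?expr1; apply/andP; split; lra.
have [W1 [b1 [W2 [b2 [W3 [b3 hW]]]]]] := mem xs inj ys hy.
pose g t := net sig k1 k2 W1 b1 W2 b2 W3 b3 (t *: e).
have gd : forall i, (i < N)%N -> g i%:R = (-1) ^+ i.
  by move=> i hi; have := hW (Ordinal hi).
pose z1 k t := \sum_(i < dx) W1 k i * (t * e i 0) + b1 k 0.
pose a1 (k : 'I_d1) (t : R) := if (k < k1)%N then sig (z1 k t) else z1 k t.
pose z2 (j : 'I_d2) (t : R) := \sum_(k < d1) W2 j k * a1 k t + b2 j 0.
pose a2 (j : 'I_d2) (t : R) := if (j < k2)%N then sig (z2 j t) else z2 j t.
have gE : forall t, g t = \sum_(j < d2) W3 0 j * a2 j t + b3.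
  move=> t; rewrite /g net_expand; congr (_ + _); apply: eq_bigr => j _.
  congr (_ * _); rewrite /a2 /z2 /a1 /z1.
  by under eq_bigr => k _ do under eq_bigr => i _ do rewrite mxE.
have Hz1 : forall k, PL (z1 k) [::].
  move=> k; apply: PL_add; last exact: PL_const.
  apply: (PL_sum (F := fun i t => W1 k i * (t * e i 0))) => i.
  apply: (PL_ext (f' := fun t => (W1 k i * e i 0) * t + 0)); last exact: PL_affine.
  by move=> t; ring.
have [C1 [sC1 HC1]] : exists C1, (size C1 <= \sum_(k < d1) (if (k < k1)%N then size S * (size (@nil R) + 1) else 0))%N
    /\ forall k, PL (a1 k) C1.
  apply: (family (P := fun k l => PL (a1 k) l)); first by move=> j l l' H sub; exact: PL_mono sub H.
  move=> k; case hk: (k < k1)%N.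
    have [W [sW HW]] := PL_comp HS (Hz1 k).
    by exists W; split => //; rewrite /a1 hk.
  by exists [::]; split => //; rewrite /a1 hk; exact: Hz1.
have Hz2 : forall j, PL (z2 j) C1.
  move=> j; apply: PL_add; last exact: PL_const.
  apply: (PL_sum (F := fun k t => W2 j k * a1 k t)) => k.
  exact: PL_scale.
have [C2 [sC2 HC2]] : exists C2, (size C2 <= \sum_(j < d2) (if (j < k2)%N then size S * (size C1 + 1) else 0))%N
    /\ forall j, PL (a2 j) (C1 ++ C2).
  apply: (family (P := fun j l => PL (a2 j) (C1 ++ l))).
    move=> j l l' H sub; apply: PL_mono H => x; rewrite !mem_cat => /orP[->//|/sub ->]; exact: orbT.
  move=> j; case hj: (j < k2)%N.
    have [W [sW HW]] := PL_comp HS (Hz2 j).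
    by exists W; split => //; rewrite /a2 hj.
  exists [::]; split => //; rewrite /a2 hj cats0; exact: Hz2.
have Hg : PL g (C1 ++ C2).
  apply: (PL_ext gE); apply: PL_add; last exact: PL_const.
  apply: (PL_sum (F := fun j t => W3 0 j * a2 j t)) => j.
  exact: PL_scale.
have := alt_bound Hg gd.
rewrite size_cat.
have h1 := leq_trans sC1 (sum_if _ _ _).
have h2 := leq_trans sC2 (sum_if _ _ _).
move: h1 h2; rewrite /= add0n muln1 => h1 h2 hN.
apply: (leq_trans hN); rewrite leq_add2r; apply: leq_add => //.
apply: (leq_trans h2); apply: leq_mul => //; apply: leq_mul => //.
by rewrite leq_add2r.
Qed.
End Core.

Theorem corollary1 (R : realType) (dx d1 d2 : nat)
  (hdx : (1 <= dx)%N) (hd1 : (1 <= d1)%N) (hd2 : (1 <= d2)%N)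
  (alpha1 alpha2 : R) (k1 k2 : nat)
  (ha1 : 0 <= alpha1 <= 1) (ha2 : 0 <= alpha2 <= 1)
  (hk1 : alpha1 * d1%:R = k1%:R) (hk2 : alpha2 * d2%:R = k2%:R) :
  (forall (sigma : R -> R) (p : nat),
     continuous sigma -> (2 <= p)%N -> has_linear_pieces sigma p ->
     forall N : nat, memorizes sigma k1 k2 dx d1 d2 N ->
     N%:R <= alpha1 * alpha2 * d1%:R * d2%:R * p%:R * (p%:R - 1)
             + alpha2 * d2%:R * (p%:R - 1)
             + alpha1 * (1 - alpha2) * d1%:R * d2%:R * (p%:R - 1) + 2)
  /\
  (forall N : nat, memorizes (@relu R) k1 k2 dx d1 d2 N ->
     N%:R <= alpha1 * (1 + alpha2) * d1%:R * d2%:R + alpha2 * d2%:R + 2).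
Proof.
have D2 : 1 <= d2%:R :> R by rewrite ler1n.
have K1 : 0 <= k1%:R :> R by exact: ler0n.
split.
  move=> sig p hc hp [hpart _] N mem.
  have [S [sS HS]] := pw_PL hc hpart.
  have hN0 := core hdx HS mem.
  have hN : (N <= k1 * p.-1 + k2 * (p.-1 * (k1 * p.-1 + 1)) + 2)%N.
    apply: (leq_trans hN0); rewrite leq_add2r; apply: leq_add; first exact: leq_mul.
    apply: leq_mul => //; apply: leq_mul => //; rewrite leq_add2r; exact: leq_mul.
  move: hN; rewrite -(ler_nat R) -subn1 !natrD !natrM !natrD !natrM natrB; last by lia.
  move=> hN; apply: (le_trans hN).
  set P := p%:R.
  have -> : alpha1 * alpha2 * d1%:R * d2%:R * P * (P - 1) + alpha2 * d2%:R * (P - 1) +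
      alpha1 * (1 - alpha2) * d1%:R * d2%:R * (P - 1) + 2 =
      (alpha1 * d1%:R) * (alpha2 * d2%:R) * P * (P - 1) + (alpha2 * d2%:R) * (P - 1)
      + (alpha1 * d1%:R) * d2%:R * (P - 1) - (alpha1 * d1%:R) * (alpha2 * d2%:R) * (P - 1) + 2
    by ring.
  rewrite hk1 hk2 -subr_ge0.
  have P1 : 0 <= P - 1 by rewrite subr_ge0 /P ler1n; lia.
  set E := (X in 0 <= X).
  have -> : E = k1%:R * (P - 1) * (d2%:R - 1) by rewrite /E; ring.
  by rewrite !mulr_ge0 // subr_ge0.
move=> N mem.
have hN := core hdx (@PL_relu R) mem.
move: hN; rewrite /= -(ler_nat R) !natrD !natrM !natrD !natrM => hN; apply: (le_trans hN).
have -> : alpha1 * (1 + alpha2) * d1%:R * d2%:R + alpha2 * d2%:R + 2 =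
   (alpha1 * d1%:R) * d2%:R + (alpha1 * d1%:R) * (alpha2 * d2%:R) + alpha2 * d2%:R + 2 by ring.
rewrite hk1 hk2 -subr_ge0.
set E := (X in 0 <= X).
have -> : E = k1%:R * (d2%:R - 1) by rewrite /E; ring.
by rewrite !mulr_ge0 // subr_ge0.
Qed.
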